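(* Let $K$ be a differential field of characteristic $0$ and let $M$ be a differential module over $K$ of dimension $3$ with $\det M=\mathbf{1}$. Suppose that there exists $F\in \mathrm{sym}^2M$ with $\partial F=0$ such that $F$ is non degenerate and has a non trivial isotropic vector. Then there exists a differential module $N$ over $K$ of dimension $2$ with $\det N=\mathbf{1}$ and $\mathrm{sym}^2N\cong M$.
   Context: A differential module over $K$ is a finite-dimensional $K$-vector space with an additive map $\partial$ satisfying $\partial(fm)=f'm+f\partial m$; $\mathrm{sym}^2M$, $\Lambda^kM$ carry the induced derivations, $\det M=\Lambda^{\dim M}M$, and $\mathbf{1}$ is the trivial module $K$ with $\partial=$ the derivation of $K$. An element $F\in\mathrm{sym}^2M$ defines a symmetric bilinear form $(a,b)=F(a\otimes b)$ on the dual $M^*$; $F$ is non degenerate if this form is, and an isotropic vector is a nonzero $a\in M^*$ with $(a,a)=0$. *)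

(* Defs.v *)
From HB Require Import structures.
From mathcomp Require Import all_boot all_order all_algebra.
Set Implicit Arguments. Unset Strict Implicit. Unset Printing Implicit Defensive.
Import GRing.Theory.
Local Open Scope ring_scope.

Definition derivation (K : fieldType) (d : K -> K) : Prop :=
  (forall x y : K, d (x + y) = d x + d y) /\
  (forall x y : K, d (x * y) = d x * y + x * d y).

(* A differential module of dimension n over (K,d) with a chosen basis
   e_0..e_{n-1}: underlying space 'cV_n (coordinates), and
   d(e_j) = sum_i A i j e_i, i.e.  partial v = map_mx d v + A *m v.
   Every differential module of dimension n is of this form. *)

(* Isomorphism of differential modules given by matrices A, B:
   an invertible K-linear map v |-> P v commuting with partial, i.e.
   map_mx d P + B *m P = P *m A. *)
Definition dmod_iso (K : fieldType) (d : K -> K) (n : nat) (A B : 'M[K]_n) : Prop :=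
  exists P : 'M[K]_n, P \in unitmx /\ map_mx d P = P *m A - B *m P.

(* The trivial module 1 = K with partial = d : the 1x1 zero matrix. *)
Definition trivmx (K : fieldType) : 'M[K]_1 := 0.

(* det M = Lambda^n M, with basis e_0 /\ ... /\ e_{n-1};
   partial(e_0/\.../\e_{n-1}) = (tr A) e_0/\.../\e_{n-1}. *)
Definition detmx (K : fieldType) (n : nat) (A : 'M[K]_n) : 'M[K]_1 := (\tr A)%:M.

(* sym^2 N for a 2-dimensional N with matrix A, in the basis
   f_0 = e_0^2, f_1 = e_0 e_1, f_2 = e_1^2:
   d f_0 = 2a f_0 + 2c f_1, d f_1 = b f_0 + (a+d') f_1 + c f_2,
   d f_2 = 2b f_1 + 2d' f_2, where a = A00, b = A01, c = A10, d' = A11. *)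
Definition sym2mx (K : fieldType) (A : 'M[K]_2) : 'M[K]_3 :=
  let a := A 0 0 in let b := A 0 1 in let c := A 1 0 in let e := A 1 1 in
  \matrix_(i < 3, j < 3)
    match nat_of_ord i, nat_of_ord j with
    | 0, 0 => 2 * a | 0, 1 => b
    | 1, 0 => 2 * c | 1, 1 => a + e | 1, 2 => 2 * b
    | 2, 1 => c | 2, 2 => 2 * e
    | _, _ => 0
    end.

(* Elements of sym^2 M (char 0) are the symmetric tensors
   F = sum_{i,j} T i j e_i (x) e_j with T^T = T; the induced derivation is
   partial F = map_mx d T + A T + T A^T. *)
Definition sym2_der (K : fieldType) (d : K -> K) (n : nat) (A T : 'M[K]_n) : 'M[K]_n :=
  map_mx d T + A *m T + T *m A^T.

(* The symmetric bilinear form on M^* defined by F: for a, b in M^*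
   (row vectors of values on the basis), (a,b) = F(a (x) b) = a T b^T. *)
Definition sym2_form (K : fieldType) (n : nat) (T : 'M[K]_n) (a b : 'rV[K]_n) : 'M[K]_1 :=
  a *m T *m b^T.

Definition sym2_nondegenerate (K : fieldType) (n : nat) (T : 'M[K]_n) : Prop :=
  forall a : 'rV[K]_n, (forall b : 'rV[K]_n, sym2_form T a b = 0) -> a = 0.

Definition sym2_isotropic (K : fieldType) (n : nat) (T : 'M[K]_n) (a : 'rV[K]_n) : Prop :=
  a != 0 /\ sym2_form T a a = 0.

(* Main.v *)
Require Import Defs.
From mathcomp Require Import all_boot all_order all_algebra.
From mathcomp Require Import ring.
From Stdlib Require Import Classical.
Import GRing.Theory.
Local Open Scope ring_scope.

Lemma sum3 (K : nmodType) (F : 'I_3 -> K) : \sum_(i < 3) F i = F 0 + F 1 + F 2.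
Proof. rewrite !big_ord_recr big_ord0 /= add0r. by congr (F _ + F _ + F _); apply: val_inj. Qed.
Lemma sum2 (K : nmodType) (F : 'I_2 -> K) : \sum_(i < 2) F i = F 0 + F 1.
Proof. rewrite !big_ord_recr big_ord0 /= add0r. by congr (F _ + F _); apply: val_inj. Qed.

Lemma ord3_ind (P : 'I_3 -> Prop) : P 0 -> P 1 -> P 2 -> forall i, P i.
Proof.
move=> h0 h1 h2 [[|[|[|i]]] Hi].
- by rewrite (_ : Ordinal Hi = 0) //; apply: val_inj.
- by rewrite (_ : Ordinal Hi = 1) //; apply: val_inj.
- by rewrite (_ : Ordinal Hi = 2) //; apply: val_inj.
- by [].
Qed.

Lemma det3 (K : comRingType) (X : 'M[K]_3) : \det X =
  X 0 0 * (X 1 1 * X 2 2 - X 1 2 * X 2 1)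
  - X 0 1 * (X 1 0 * X 2 2 - X 1 2 * X 2 0)
  + X 0 2 * (X 1 0 * X 2 1 - X 1 1 * X 2 0).
Proof.
rewrite (expand_det_row _ 0) sum3 /cofactor.
rewrite !(expand_det_row _ 0) !sum2 /cofactor !det_mx11 !mxE /=.
pose Y (m n : nat) := X (inord m) (inord n).
have eX : forall i j, X i j = Y i j by move=> i j; rewrite /Y !inord_val.
rewrite !eX; clearbody Y.
repeat match goal with |- context[Y ?m ?n] =>
  let m' := eval vm_compute in m in let n' := eval vm_compute in n in
  progress change (Y m n) with (Y m' n') end.
rewrite /= !expr0 ?expr1 ?expr2; ring.
Qed.


Lemma dD {K : fieldType} {d : K -> K} (hd : derivation d) x y : d (x + y) = d x + d y. Proof. exact: hd.1. Qed.
Lemma dM {K : fieldType} {d : K -> K} (hd : derivation d) x y : d (x * y) = d x * y + x * d y. Proof. exact: hd.2. Qed.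
Lemma d0 {K : fieldType} {d : K -> K} (hd : derivation d) : d 0 = 0.
Proof. have h := (dD hd) 0 0; rewrite addr0 in h. by apply: (addrI (d 0)); rewrite -h addr0. Qed.
Lemma dN {K : fieldType} {d : K -> K} (hd : derivation d) x : d (- x) = - d x.
Proof. by apply/eqP; rewrite -addr_eq0 -(dD hd) addNr (d0 hd). Qed.
Lemma dB {K : fieldType} {d : K -> K} (hd : derivation d) x y : d (x - y) = d x - d y.
Proof. by rewrite (dD hd) (dN hd). Qed.
Lemma d1 {K : fieldType} {d : K -> K} (hd : derivation d) : d 1 = 0.
Proof. have h := (dM hd) 1 1; rewrite !mul1r mulr1 in h. by apply: (addrI (d 1)); rewrite -h addr0. Qed.
Lemma dn {K : fieldType} {d : K -> K} (hd : derivation d) n : d n%:R = 0.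
Proof. by elim: n => [|n IH]; rewrite ?(d0 hd) // -addn1 natrD (dD hd) IH (d1 hd) addr0. Qed.
Lemma dsum {K : fieldType} {d : K -> K} (hd : derivation d) I r (P : pred I) (F : I -> K) :
  d (\sum_(i <- r | P i) F i) = \sum_(i <- r | P i) d (F i).
Proof. exact: (big_morph d (dD hd) (d0 hd)). Qed.
Lemma dmulmx {K : fieldType} {d : K -> K} (hd : derivation d) m n p (X : 'M[K]_(m, n)) (Y : 'M[K]_(n, p)) :
  map_mx d (X *m Y) = map_mx d X *m Y + X *m map_mx d Y.
Proof.
apply/matrixP => i j; rewrite !mxE (dsum hd) -big_split /=.
by apply: eq_bigr => k _; rewrite (dM hd) !mxE.
Qed.
Lemma dscale {K : fieldType} {d : K -> K} (hd : derivation d) m n a (X : 'M[K]_(m, n)) : d a = 0 ->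
  map_mx d (a *: X) = a *: map_mx d X.
Proof. by move=> ha; apply/matrixP => i j; rewrite !mxE (dM hd) ha mul0r add0r. Qed.
Lemma dtr {K : fieldType} {d : K -> K} (hd : derivation d) m n (X : 'M[K]_(m, n)) : map_mx d X^T = (map_mx d X)^T.
Proof. by apply/matrixP => i j; rewrite !mxE. Qed.
Lemma dinv_const {K : fieldType} {d : K -> K} (hd : derivation d) x : d x = 0 -> d x^-1 = 0.
Proof.
move=> hx; have [->|nx] := eqVneq x 0; first by rewrite invr0 (d0 hd).
have := (dM hd) x x^-1; rewrite mulfV // (d1 hd) hx mul0r add0r => /esym/eqP.
by rewrite mulf_eq0 (negbTE nx) => /eqP.
Qed.

Definition f {K : comRingType} (t00 t01 t02 t11 t12 t22 u0 u1 u2 v0 v1 v2 : K) :=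
  u0*t00*v0 + u0*t01*v1 + u0*t02*v2 + u1*t01*v0 + u1*t11*v1 + u1*t12*v2
  + u2*t02*v0 + u2*t12*v1 + u2*t22*v2.
Definition dt {K : comRingType} (t00 t01 t02 t11 t12 t22 : K) :=
  t00*(t11*t22 - t12*t12) - t01*(t01*t22-t12*t02) + t02*(t01*t12 - t11*t02).
Definition cvec {K : comRingType} (t00 t01 t02 t11 t12 t22 a0 a1 a2 b0 b1 b2 : K) : K * K * K :=
  let w0 := a1*b2 - a2*b1 in
  let w1 := a2*b0 - a0*b2 in
  let w2 := a0*b1 - a1*b0 in
  let m00 := t11*t22 - t12*t12 in
  let m01 := t02*t12 - t01*t22 in
  let m02 := t01*t12 - t02*t11 in
  let m11 := t00*t22 - t02*t02 in
  let m12 := t01*t02 - t00*t12 in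
  let m22 := t00*t11 - t01*t01 in
  (w0 * m00 + w1 * m01 + w2 * m02, w0 * m01 + w1 * m11 + w2 * m12, w0 * m02 + w1 * m12 + w2 * m22).

Lemma ddet_sym {K : fieldType} {d : K -> K} (hd : derivation d) {T A : 'M[K]_3} :
  T^T = T -> sym2_der d A T = 0 -> d (\det T) = -2 * \tr A * \det T.
Proof.
move=> hT H.
have hij i j : d (T i j) = - ((A *m T) i j + (T *m A^T) i j).
  have := congr1 (fun M : 'M[K]_3 => M i j) H; rewrite /sym2_der !mxE => /eqP.
  by rewrite -addrA addr_eq0 => /eqP.
have sym i j : T j i = T i j by rewrite -{1}hT mxE.
rewrite det3; repeat progress rewrite ?(dB hd) ?(dD hd) ?(dM hd) ?(dN hd); rewrite !hij. rewrite !mxE !sum3 !mxE /mxtrace sum3.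
rewrite (sym 1 0) (sym 2 0) (sym 2 1); ring.
Qed.

Definition mk3 {K : nmodType} (x00 x01 x02 x10 x11 x12 x20 x21 x22 : K) : 'M[K]_3 := locked
  (\matrix_(i < 3, j < 3) nth 0 (nth [::] [:: [:: x00; x01; x02]; [:: x10; x11; x12]; [:: x20; x21; x22]] i) j).

Lemma mk3_00 (K : nmodType) (x00 x01 x02 x10 x11 x12 x20 x21 x22 : K) :
  mk3 x00 x01 x02 x10 x11 x12 x20 x21 x22 0 0 = x00.
Proof. by rewrite /mk3 -lock mxE. Qed.
Lemma mk3_01 (K : nmodType) (x00 x01 x02 x10 x11 x12 x20 x21 x22 : K) :
  mk3 x00 x01 x02 x10 x11 x12 x20 x21 x22 0 1 = x01.
Proof. by rewrite /mk3 -lock mxE. Qed.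
Lemma mk3_02 (K : nmodType) (x00 x01 x02 x10 x11 x12 x20 x21 x22 : K) :
  mk3 x00 x01 x02 x10 x11 x12 x20 x21 x22 0 2 = x02.
Proof. by rewrite /mk3 -lock mxE. Qed.
Lemma mk3_10 (K : nmodType) (x00 x01 x02 x10 x11 x12 x20 x21 x22 : K) :
  mk3 x00 x01 x02 x10 x11 x12 x20 x21 x22 1 0 = x10.
Proof. by rewrite /mk3 -lock mxE. Qed.
Lemma mk3_11 (K : nmodType) (x00 x01 x02 x10 x11 x12 x20 x21 x22 : K) :
  mk3 x00 x01 x02 x10 x11 x12 x20 x21 x22 1 1 = x11.
Proof. by rewrite /mk3 -lock mxE. Qed.
Lemma mk3_12 (K : nmodType) (x00 x01 x02 x10 x11 x12 x20 x21 x22 : K) :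
  mk3 x00 x01 x02 x10 x11 x12 x20 x21 x22 1 2 = x12.
Proof. by rewrite /mk3 -lock mxE. Qed.
Lemma mk3_20 (K : nmodType) (x00 x01 x02 x10 x11 x12 x20 x21 x22 : K) :
  mk3 x00 x01 x02 x10 x11 x12 x20 x21 x22 2 0 = x20.
Proof. by rewrite /mk3 -lock mxE. Qed.
Lemma mk3_21 (K : nmodType) (x00 x01 x02 x10 x11 x12 x20 x21 x22 : K) :
  mk3 x00 x01 x02 x10 x11 x12 x20 x21 x22 2 1 = x21.
Proof. by rewrite /mk3 -lock mxE. Qed.
Lemma mk3_22 (K : nmodType) (x00 x01 x02 x10 x11 x12 x20 x21 x22 : K) :
  mk3 x00 x01 x02 x10 x11 x12 x20 x21 x22 2 2 = x22.
Proof. by rewrite /mk3 -lock mxE. Qed.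
Definition mk3E := (mk3_00, mk3_01, mk3_02, mk3_10, mk3_11, mk3_12, mk3_20, mk3_21, mk3_22).

Lemma mx3P {K : nmodType} (M N : 'M[K]_3) :
  M 0 0 = N 0 0 -> M 0 1 = N 0 1 -> M 0 2 = N 0 2 ->
  M 1 0 = N 1 0 -> M 1 1 = N 1 1 -> M 1 2 = N 1 2 ->
  M 2 0 = N 2 0 -> M 2 1 = N 2 1 -> M 2 2 = N 2 2 -> M = N.
Proof.
move=> *; apply/matrixP => i j.
by move: i j; apply: ord3_ind; apply: ord3_ind.
Qed.

Definition Fm {K : comRingType} (T : 'M[K]_3) (u v : 'rV[K]_3) :=
  f (T 0 0) (T 0 1) (T 0 2) (T 1 1) (T 1 2) (T 2 2) (u 0 0) (u 0 1) (u 0 2) (v 0 0) (v 0 1) (v 0 2).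

Lemma FmE {K : comRingType} (T : 'M[K]_3) (u v : 'rV[K]_3) : T^T = T ->
  (u *m T *m v^T) 0 0 = Fm T u v.
Proof.
move=> hT; have sym i j : T j i = T i j by rewrite -{1}hT mxE.
(repeat progress rewrite ?mxE ?sum3); rewrite (sym 0 1) (sym 0 2) (sym 1 2) /Fm /f. ring.
Qed.

Definition dtT {K : comRingType} (T : 'M[K]_3) := dt (T 0 0) (T 0 1) (T 0 2) (T 1 1) (T 1 2) (T 2 2).

Lemma dtTE {K : comRingType} (T : 'M[K]_3) : T^T = T -> \det T = dtT T.
Proof.
move=> hT; have sym i j : T j i = T i j by rewrite -{1}hT mxE.
rewrite det3 (sym 0 1) (sym 0 2) (sym 1 2) /dtT /dt; ring.
Qed.

Definition Wmx {K : comRingType} (T : 'M[K]_3) (a b : 'rV[K]_3) (l : K) : 'M[K]_3 :=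
  let t00 := T 0 0 in let t01 := T 0 1 in let t02 := T 0 2 in
  let t11 := T 1 1 in let t12 := T 1 2 in let t22 := T 2 2 in
  let a0 := a 0 0 in let a1 := a 0 1 in let a2 := a 0 2 in
  let b0 := b 0 0 in let b1 := b 0 1 in let b2 := b 0 2 in
  let c := cvec t00 t01 t02 t11 t12 t22 a0 a1 a2 b0 b1 b2 in
  mk3 a0 a1 a2 c.1.1 c.1.2 c.2 (l * b0) (l * b1) (l * b2).

Lemma WTW {K : comRingType} (T : 'M[K]_3) (a b : 'rV[K]_3) (l : K) : T^T = T ->
  Wmx T a b l *m T *m (Wmx T a b l)^T =
  mk3 (Fm T a a) 0 (l * Fm T a b) 0 (dtT T * (Fm T a a * Fm T b b - Fm T a b ^+ 2)) 0
      (l * Fm T a b) 0 (l ^+ 2 * Fm T b b).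
Proof.
move=> hT; have sym i j : T j i = T i j by rewrite -{1}hT mxE.
rewrite /Wmx /Fm /dtT.
apply: mx3P; (repeat progress rewrite ?mxE ?sum3); rewrite !mk3E (sym 0 1) (sym 0 2) (sym 1 2).
all: rewrite /f /cvec /dt /=; ring.
Qed.

Definition mk2 {K : nmodType} (x00 x01 x10 x11 : K) : 'M[K]_2 := locked
  (\matrix_(i < 2, j < 2) nth 0 (nth [::] [:: [:: x00; x01]; [:: x10; x11]] i) j).
Lemma mk2_00 (K : nmodType) (x00 x01 x10 x11 : K) :
  mk2 x00 x01 x10 x11 0 0 = x00.
Proof. by rewrite /mk2 -lock mxE. Qed.
Lemma mk2_01 (K : nmodType) (x00 x01 x10 x11 : K) :
  mk2 x00 x01 x10 x11 0 1 = x01.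
Proof. by rewrite /mk2 -lock mxE. Qed.
Lemma mk2_10 (K : nmodType) (x00 x01 x10 x11 : K) :
  mk2 x00 x01 x10 x11 1 0 = x10.
Proof. by rewrite /mk2 -lock mxE. Qed.
Lemma mk2_11 (K : nmodType) (x00 x01 x10 x11 : K) :
  mk2 x00 x01 x10 x11 1 1 = x11.
Proof. by rewrite /mk2 -lock mxE. Qed.
Definition mk2E := (mk2_00, mk2_01, mk2_10, mk2_11).

Lemma s2_00 (K : fieldType) (B : 'M[K]_2) : sym2mx B 0 0 = 2 * B 0 0.
Proof. by rewrite /sym2mx mxE. Qed.
Lemma s2_01 (K : fieldType) (B : 'M[K]_2) : sym2mx B 0 1 = B 0 1.
Proof. by rewrite /sym2mx mxE. Qed.
Lemma s2_02 (K : fieldType) (B : 'M[K]_2) : sym2mx B 0 2 = 0.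
Proof. by rewrite /sym2mx mxE. Qed.
Lemma s2_10 (K : fieldType) (B : 'M[K]_2) : sym2mx B 1 0 = 2 * B 1 0.
Proof. by rewrite /sym2mx mxE. Qed.
Lemma s2_11 (K : fieldType) (B : 'M[K]_2) : sym2mx B 1 1 = B 0 0 + B 1 1.
Proof. by rewrite /sym2mx mxE. Qed.
Lemma s2_12 (K : fieldType) (B : 'M[K]_2) : sym2mx B 1 2 = 2 * B 0 1.
Proof. by rewrite /sym2mx mxE. Qed.
Lemma s2_20 (K : fieldType) (B : 'M[K]_2) : sym2mx B 2 0 = 0.
Proof. by rewrite /sym2mx mxE. Qed.
Lemma s2_21 (K : fieldType) (B : 'M[K]_2) : sym2mx B 2 1 = B 1 0.
Proof. by rewrite /sym2mx mxE. Qed.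
Lemma s2_22 (K : fieldType) (B : 'M[K]_2) : sym2mx B 2 2 = 2 * B 1 1.
Proof. by rewrite /sym2mx mxE. Qed.
Definition s2E := (s2_00, s2_01, s2_02, s2_10, s2_11, s2_12, s2_20, s2_21, s2_22).

Lemma ac4 (V : zmodType) (a b c e : V) : a + b + c + e = c + a + (e + b).
Proof. by rewrite [c + a]addrC [e + b]addrC addrACA addrA. Qed.

Theorem theorem2p1 (K : fieldType) (d : K -> K) (hd : derivation d)
  (hchar : [pchar K] =i pred0) (A : 'M[K]_3)
  (hdetM : dmod_iso d (detmx A) (trivmx K)) :
  (exists T : 'M[K]_3,
      trmx T = T /\ sym2_der d A T = 0 /\ sym2_nondegenerate T /\
      exists a : 'rV[K]_3, sym2_isotropic T a) ->
  exists B : 'M[K]_2,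
    dmod_iso d (detmx B) (trivmx K) /\ dmod_iso d (sym2mx B) A.
Proof.
move=> [T [hTs [hder [hnd [a [ha0 haa]]]]]].
have two_nz : (2%:R : K) != 0.
  by have := hchar 2; rewrite !inE /= => /negbT.
have sym i j : T j i = T i j by rewrite -{1}hTs mxE.
case: hdetM => p [pu hp].
pose p0 := p 0 0.
have hp0 : d p0 = p0 * \tr A.
  have := congr1 (fun M : 'M[K]_1 => M 0 0) hp.
  by rewrite /trivmx mul0mx subr0 /detmx mul_mx_scalar !mxE => ->; rewrite mulrC.
have p0nz : p0 != 0 by move: pu; rewrite unitmxE det_mx11 unitfE.
have dTnz : \det T != 0.
  apply/negP => /det0P [v nv vT]; move/negP: nv; apply; apply/eqP.
  by apply: hnd => b; rewrite /sym2_form vT mul0mx.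
have ddT := ddet_sym hd hTs hder.
pose C := p0 ^+ 2 * \det T.
have dC : d C = 0.
  rewrite /C (dM hd) expr2 (dM hd) hp0 ddT; ring.
have Cnz : C != 0 by rewrite mulf_neq0 // expf_neq0.
have [b0 hb0] : exists b0 : 'rV[K]_3, Fm T a b0 != 0.
  case: (classic (exists b0 : 'rV[K]_3, Fm T a b0 != 0)) => // H.
  exfalso; move/negP: ha0; apply; apply/eqP; apply: hnd => b.
  apply/matrixP => i j; rewrite !ord1 [RHS]mxE /sym2_form FmE //.
  by case: (eqVneq (Fm T a b) 0) => // hb; case: H; exists b.
have haa' : Fm T a a = 0.
  by have := congr1 (fun M : 'M[K]_1 => M 0 0) haa; rewrite /sym2_form FmE // mxE.
pose e0 := Fm T a b0.
pose k := Fm T b0 b0 / (2 * e0).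
pose b := b0 - k *: a.
have hab : Fm T a b = e0.
  have -> : Fm T a b = Fm T a b0 - k * Fm T a a by rewrite /Fm /f !mxE; ring.
  by rewrite haa' mulr0 subr0.
have hbb : Fm T b b = 0.
  have -> : Fm T b b = Fm T b0 b0 - 2 * k * Fm T a b0 + k^+2 * Fm T a a
    by rewrite /Fm /f !mxE; ring.
  rewrite haa' mulr0 addr0 /k -/e0; field; exact/andP.
have d0nz : e0 != 0 by [].
pose l := \det T * e0 / 2.
pose dl := l * e0.
have dlnz : dl != 0 by rewrite /dl /l !mulf_neq0 // invr_neq0.
pose S : 'M[K]_3 := mk3 0 0 1 0 (-2) 0 1 0 0.
pose W := Wmx T a b l.
have hW : W *m T *m W^T = dl *: S.
  rewrite /W WTW // haa' hbb hab -dtTE //.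
  by apply: mx3P; rewrite !mxE !mk3E /dl /l; field; rewrite ?two_nz.
have detS : \det S = 2 by rewrite det3 !mk3E; ring.
have hdW : \det W ^+ 2 * \det T = 2 * dl ^+ 3.
  have := congr1 determinant hW; rewrite !det_mulmx det_tr detZ detS => hh.
  by rewrite -[2 * _]mulrC -hh; ring.
have Wnz : \det W != 0.
  apply/eqP => h0; move: hdW; rewrite h0 expr0n /= mul0r => /esym/eqP.
  by rewrite mulf_eq0 (negbTE two_nz) expf_eq0 (negbTE dlnz) andbF.
have Wu : W \in unitmx by rewrite unitmxE unitfE.
pose s := dl ^+ 2 * p0 / \det W.
have snz : s != 0 by rewrite /s !mulf_neq0 ?expf_neq0 // invr_neq0.
pose P := s *: invmx W.
have Pu : P \in unitmx by rewrite unitmxZ ?unitfE // unitmx_inv.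
pose kap := 2 / C.
have dkap : d kap = 0 by rewrite /kap (dM hd) (dn hd 2%N) (dinv_const hd _ dC) mul0r mulr0 addr0.
have kapnz : kap != 0 by rewrite /kap mulf_neq0 // invr_neq0.
have eT : \det T = 2 * dl ^+ 3 / \det W ^+ 2.
  by rewrite -hdW; field.
have ks : kap * s ^+ 2 = dl.
  by rewrite /kap /s /C eT; field; rewrite ?dlnz ?p0nz ?Wnz ?two_nz.
have hTP : T = kap *: (P *m S *m P^T).
  have eT1 : T = invmx W *m (W *m T *m W^T) *m (invmx W)^T.
    by rewrite !mulmxA mulVmx // mul1mx -mulmxA -trmx_mul mulVmx // trmx1 mulmx1.
  rewrite {1}eT1 hW /P linearZ /= [(s *: _)^T]linearZ /=.
  by rewrite -!scalemxAl -scalemxAr !scalerA -mulrA -expr2 ks.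
clearbody P.
have dS : map_mx d S = 0.
  apply/matrixP => i j; rewrite !mxE /S; elim/ord3_ind: i; elim/ord3_ind: j;
  by rewrite !mk3E ?(d0 hd) ?(d1 hd) ?(dN hd) ?(dn hd) ?oppr0.
pose A0 := invmx P *m (A *m P + map_mx d P).
have hPA0 : P *m A0 = A *m P + map_mx d P by rewrite /A0 mulKVmx.
pose X0 := A0 *m S + S *m A0^T.
have e1 : P *m X0 *m P^T = (A *m P + map_mx d P) *m S *m P^T + P *m S *m (A *m P + map_mx d P)^T.
  by rewrite -hPA0 trmx_mul /X0 mulmxDr mulmxDl !mulmxA.
have e2 : map_mx d T + A *m T + T *m A^T = kap *: ((A *m P + map_mx d P) *m S *m P^T + P *m S *m (A *m P + map_mx d P)^T).
  rewrite hTP (dscale hd) // !(dmulmx hd) dS mulmx0 addr0 (dtr hd).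
  rewrite [(A *m P + _)^T]linearD /= trmx_mul -scalemxAr -scalemxAl -!scalerDr.
  congr (_ *: _); rewrite !mulmxDl !mulmxDr !mulmxA; exact: ac4.
have hX0 : X0 = 0.
  have h1 : kap *: (P *m X0 *m P^T) = 0 by rewrite e1 -e2; exact: hder.
  move/eqP: h1; rewrite scaler_eq0 (negbTE kapnz) /= => /eqP h2.
  have := congr1 (fun M => invmx P *m M *m invmx P^T) h2.
  by rewrite /= mulmxA mulmxK ?unitmx_tr // mulKmx // mulmx0 mul0mx.
have hX i j : (A0 *m S + S *m A0^T) i j = 0 by rewrite -/X0 hX0 mxE.
clearbody A0.
have x02 : A0 0 2 = 0.
  move: (hX 0 0); rewrite !mxE !sum3 !mxE /S !mk3E => h.
  have : 2 * A0 0 2 = 0 by rewrite -h; ring.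
  by move/eqP; rewrite mulf_eq0 (negbTE two_nz) => /eqP.
have x20 : A0 2 0 = 0.
  move: (hX 2 2); rewrite !mxE !sum3 !mxE /S !mk3E => h.
  have : 2 * A0 2 0 = 0 by rewrite -h; ring.
  by move/eqP; rewrite mulf_eq0 (negbTE two_nz) => /eqP.
have x11 : A0 1 1 = 0.
  move: (hX 1 1); rewrite !mxE !sum3 !mxE /S !mk3E => h.
  have : 2 * (- 2 * A0 1 1) = 0 by rewrite -h; ring.
  move/eqP; rewrite !mulf_eq0 (negbTE two_nz) /= oppr_eq0 (negbTE two_nz) /=.
  by move/eqP.
have x12 : A0 1 2 = 2 * A0 0 1.
  move: (hX 0 1); rewrite !mxE !sum3 !mxE /S !mk3E => h.
  by apply/eqP; rewrite -subr_eq0 -h; apply/eqP; ring.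
have x22 : A0 2 2 = - A0 0 0.
  move: (hX 0 2); rewrite !mxE !sum3 !mxE /S !mk3E => h.
  by apply/eqP; rewrite -subr_eq0 -h; apply/eqP; ring.
have x10 : A0 1 0 = 2 * A0 2 1.
  move: (hX 1 2); rewrite !mxE !sum3 !mxE /S !mk3E => h.
  by apply/eqP; rewrite -subr_eq0 -h; apply/eqP; ring.
pose B := mk2 (A0 0 0 / 2) (A0 0 1) (A0 2 1) (- (A0 0 0 / 2)).
have hA0 : A0 = sym2mx B.
  apply: mx3P; rewrite !s2E /B ?mk2E ?x02 ?x20 ?x11 ?x12 ?x22 ?x10 //; field; exact: two_nz.
exists B; split.
  exists 1%:M; split; first exact: unitmx1.
  rewrite /trivmx mul0mx subr0 /detmx mul1mx.
  have -> : \tr B = 0 by rewrite /mxtrace sum2 /B !mk2E subrr.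
  apply/matrixP => i j; rewrite !mxE.
  by case: (i == j); rewrite ?mulr1n ?mulr0n ?(d1 hd) ?(d0 hd).
exists P; split; first exact: Pu.
by rewrite -hA0 hPA0 addrC addKr.
Qed.
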